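(* Let $p\geq 3$ be a prime and let $G$ be a group of order $p^5$ generated by elements $f_1,\dots,f_5$ which (possibly among other relations) satisfy: (i) $f_4^p=f_5^p=1$ and $f_5\in Z(G)$; (ii) $[f_2,f_1]=f_3$, $[f_3,f_1]=f_4$, $[f_4,f_1]=[f_3,f_2]=f_5$, $[f_4,f_2]=[f_4,f_3]=1$; (iii) $\langle f_4,f_5\rangle\cong C_p\times C_p$, and $G/\langle f_4,f_5\rangle$ is a non-abelian group of order $p^3$ and exponent $p$. Then $B_0(G)\neq 0$.
   Context: $[g,h]=g^{-1}h^{-1}gh$; $Z(G)$ is the center of $G$; $C_p$ is the cyclic group of order $p$. $B_0(G)=\bigcap_A \ker\{\mathrm{res}^G_A : H^2(G,\mathbb{Q}/\mathbb{Z})\to H^2(A,\mathbb{Q}/\mathbb{Z})\}$, where $A$ runs over all bicyclic subgroups of $G$ (cyclic groups or direct products of two cyclic groups), with trivial action on $\mathbb{Q}/\mathbb{Z}$. *)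

(* Defs.v *)
From HB Require Import structures.
From mathcomp Require Import all_boot all_order all_algebra all_fingroup all_solvable.
Set Implicit Arguments. Unset Strict Implicit. Unset Printing Implicit Defensive.
Import GRing.Theory Num.Theory.

(* Q/Z-valued functions are represented by rat-valued functions, and
   equalities in Q/Z are read "modulo Z" (difference is an integer). *)
Local Open Scope ring_scope.
Local Open Scope group_scope.

Definition cocycle2 (gT : finGroupType) (A : {set gT}) (c : gT -> gT -> rat) : Prop :=
  forall x y z, x \in A -> y \in A -> z \in A ->
    (c y z - c (x * y)%g z + c x (y * z)%g - c x y)%R \is a Num.int.

Definition coboundary2 (gT : finGroupType) (A : {set gT}) (c : gT -> gT -> rat) : Prop :=
  exists b : gT -> rat, forall x y, x \in A -> y \in A ->
    (c x y - (b x + b y - b (x * y)%g))%R \is a Num.int.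

(* bicyclic: cyclic or a direct product of two cyclic groups, i.e. an
   abelian group generated by (at most) two elements. *)
Definition bicyclic (gT : finGroupType) (A : {group gT}) : Prop :=
  abelian A /\ exists a b : gT, A :=: <<[set a; b]>>.

Definition in_B0 (gT : finGroupType) (G : {group gT}) (c : gT -> gT -> rat) : Prop :=
  cocycle2 G c /\
  forall A : {group gT}, A \subset G -> bicyclic A -> coboundary2 A c.

Definition B0_trivial (gT : finGroupType) (G : {group gT}) : Prop :=
  forall c, in_B0 G c -> coboundary2 G c.

(* Main.v *)
Require Import Defs.
From mathcomp Require Import all_boot all_order all_algebra all_fingroup all_solvable.
From mathcomp Require Import ring zify.
Set Implicit Arguments. Unset Strict Implicit. Unset Printing Implicit Defensive.
Import GRing.Theory Num.Theory.
Local Open Scope group_scope.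
Lemma gen_closed (T : finGroupType) (A : {set T}) (P : pred T) :
  P 1 -> (forall x y, P x -> P y -> P (x * y)) -> (forall x, x \in A -> P x) ->
  forall x, x \in <<A>> -> P x.
Proof.
move=> P1 PM PA x Hx.
have gS : group_set [set x | P x].
  by apply/group_setP; split; [rewrite inE | move=> u v; rewrite !inE; apply: PM].
have : <<A>> \subset Group gS.
  by rewrite gen_subG; apply/subsetP => a Ha; rewrite inE; apply: PA.
by move/subsetP/(_ x Hx); rewrite inE.
Qed.

Lemma Fp_addE p (a b : 'F_p) : prime p -> nat_of_ord (a + b)%R = ((nat_of_ord a + nat_of_ord b) %% p)%N.
Proof. move=> pp; have -> : (a + b = (nat_of_ord a + nat_of_ord b)%:R :> 'F_p)%R by rewrite GRing.natrD !natr_Zp.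
by rewrite val_Fp_nat. Qed.

Lemma Fp_mulE p (a b : 'F_p) : prime p -> nat_of_ord (a * b)%R = ((nat_of_ord a * nat_of_ord b) %% p)%N.
Proof. move=> pp; have -> : (a * b = (nat_of_ord a * nat_of_ord b)%:R :> 'F_p)%R by rewrite GRing.natrM !natr_Zp.
by rewrite val_Fp_nat. Qed.

Lemma expFpD (T : finGroupType) p (g : T) (a b : 'F_p) : prime p -> g ^+ p = 1 ->
  g ^+ nat_of_ord (a + b)%R = g ^+ nat_of_ord a * g ^+ nat_of_ord b.
Proof. by move=> pp gp; rewrite Fp_addE // expg_mod // expgD. Qed.

Lemma expFpM (T : finGroupType) p (g : T) (a b : 'F_p) : prime p -> g ^+ p = 1 ->
  g ^+ nat_of_ord (a * b)%R = g ^+ (nat_of_ord a * nat_of_ord b).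
Proof. by move=> pp gp; rewrite Fp_mulE // expg_mod. Qed.

Lemma expFpN (T : finGroupType) p (g : T) (n : nat) : prime p -> g ^+ p = 1 ->
  g ^+ nat_of_ord (n%:R : 'F_p)%R = g ^+ n.
Proof. by move=> pp gp; rewrite val_Fp_nat // expg_mod. Qed.

Lemma Fp_ltp p (a : 'F_p) : prime p -> (nat_of_ord a < p)%N.
Proof. by move=> pp; rewrite -{2}(Fp_cast pp); apply: ltn_ord. Qed.
Definition Fm (T : finGroupType) (p : nat) (h1 h2 h3 : T) (t : 'F_p * 'F_p * 'F_p) : T :=
  h1 ^+ t.1.1 * h2 ^+ t.1.2 * h3 ^+ t.2.
Definition law p (s t : 'F_p * 'F_p * 'F_p) : 'F_p * 'F_p * 'F_p :=
  (s.1.1 + t.1.1, s.1.2 + t.1.2, s.2 + t.2 + s.1.2 * t.1.1)%R.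

Lemma swap21 (T : finGroupType) (h1 h2 h3 : T) :
  commute h3 h1 -> commute h3 h2 -> h2 * h1 = h1 * h2 * h3 ->
  forall m n, h2 ^+ m * h1 ^+ n = h1 ^+ n * h2 ^+ m * h3 ^+ (m * n).
Proof.
move=> c31 c32 e m n.
have R : [~ h2, h1] = h3 by apply: (@mulgI _ (h1 * h2)); rewrite -e -commgC.
rewrite commgC commXXg R // ?R; exact: commute_sym.
Qed.

Lemma swapg (T : finGroupType) (w x y : T) : commute x y -> w * x * y = w * y * x.
Proof. by move=> cxy; rewrite -!mulgA cxy. Qed.

Lemma Fm_mul (T : finGroupType) p (h1 h2 h3 : T) (s t : 'F_p * 'F_p * 'F_p) :
  prime p -> h1 ^+ p = 1 -> h2 ^+ p = 1 -> h3 ^+ p = 1 ->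
  commute h3 h1 -> commute h3 h2 -> h2 * h1 = h1 * h2 * h3 ->
  Fm h1 h2 h3 s * Fm h1 h2 h3 t = Fm h1 h2 h3 (law s t).
Proof.
move=> pp e1 e2 e3 c31 c32 e.
case: s => [[a b] c]; case: t => [[a' b'] c'].
rewrite /Fm /law; cbn [fst snd]; rewrite !expFpD // expFpM //.
rewrite !mulgA.
rewrite (swapg _ (commuteX2 _ _ c31)) (swapg _ (commuteX2 _ _ c32)).
rewrite -(mulgA (h1 ^+ a) (h2 ^+ b)) (swap21 c31 c32 e) !mulgA.
rewrite (swapg _ (commute_sym (commuteX2 _ _ c32))).
rewrite -!mulgA -!expgD; do 3 congr (_ * _).
rewrite mulgA -expgD mulgA (commuteX2 _ _ c32) -mulgA -expgD; congr (_ * (_ ^+ _)); lia.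
Qed.
Definition crd (T : finGroupType) (p : nat) (h1 h2 h3 : T) (h : T) : 'F_p * 'F_p * 'F_p :=
  odflt (0, 0, 0)%R [pick t | Fm h1 h2 h3 t == h].

Lemma Fp_val1 p : prime p -> nat_of_ord (1 : 'F_p)%R = 1%N.
Proof.
move=> pp; have -> : (1 : 'F_p)%R = (1%:R)%R by [].
by rewrite val_Fp_nat // modn_small // prime_gt1.
Qed.

Lemma Fp_val0 p : nat_of_ord (0 : 'F_p)%R = 0%N.
Proof. by []. Qed.

Lemma crd_main (T : finGroupType) (H : {group T}) p (h1 h2 h3 : T) :
  prime p -> h1 \in H -> h2 \in H -> h3 \in H -> (forall h, h \in H -> h ^+ p = 1) ->
  #|H| = (p ^ 3)%N -> H \subset <<[set h1; h2; h3]>> ->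
  commute h3 h1 -> commute h3 h2 -> h2 * h1 = h1 * h2 * h3 ->
  [/\ (forall t : 'F_p * 'F_p * 'F_p, Fm h1 h2 h3 t \in H),
      (forall h, h \in H -> Fm h1 h2 h3 (crd p h1 h2 h3 h) = h) &
      (forall t : 'F_p * 'F_p * 'F_p, crd p h1 h2 h3 (Fm h1 h2 h3 t) = t)].
Proof.
move=> pp H1 H2 H3 Hexp cH sH c31 c32 e.
have FH : forall t : 'F_p * 'F_p * 'F_p, Fm h1 h2 h3 t \in H.
  by move=> [[a b] c]; rewrite /Fm !groupM ?groupX.
set X := Fm h1 h2 h3 @: [set: 'F_p * 'F_p * 'F_p].
have gX : group_set X.
  apply/group_setP; split.
    apply/imsetP; exists (0, 0, 0)%R; rewrite ?inE //.
    by rewrite /Fm /= !expg0 !mulg1.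
  move=> _ _ /imsetP[s _ ->] /imsetP[t _ ->].
  rewrite Fm_mul ?Hexp //; exact: imset_f.
have sHX : H \subset X.
  apply: (subset_trans sH); rewrite (gen_subG _ (Group gX)).
  apply/subsetP => x; rewrite !inE => /orP[/orP[]|] /eqP ->; apply/imsetP.
  - by exists (1, 0, 0)%R; rewrite ?inE // /Fm; cbn [fst snd]; rewrite Fp_val1 // !expg0 expg1 !mulg1.
  - by exists (0, 1, 0)%R; rewrite ?inE // /Fm; cbn [fst snd]; rewrite Fp_val1 // !expg0 expg1 mulg1 mul1g.
  - by exists (0, 0, 1)%R; rewrite ?inE // /Fm; cbn [fst snd]; rewrite Fp_val1 // !expg0 expg1 !mul1g.
have sXH : X \subset H by apply/subsetP => _ /imsetP[t _ ->].
have eXH : X = H :> {set T} by apply/eqP; rewrite eqEsubset sXH.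
have inj : {in [set: 'F_p * 'F_p * 'F_p] &, injective (Fm h1 h2 h3)}.
  apply/imset_injP; rewrite -/X eXH cH cardsT !card_prod card_Fp //.
  by rewrite expnS expnS expn1 mulnA.
have crdF : forall h, h \in H -> Fm h1 h2 h3 (crd p h1 h2 h3 h) = h.
  move=> h; rewrite -eXH => /imsetP[t _ ->]; rewrite /crd.
  by case: pickP => [t' /eqP //|/(_ t)]; rewrite eqxx.
split=> // t; apply: inj; rewrite ?inE //; exact: crdF.
Qed.
Lemma int_eq (x y : rat) : x \is a Num.int -> x = y -> y \is a Num.int.
Proof. by move=> h <-. Qed.

Lemma cyc_cob (T : finGroupType) (u : T) (f : T -> T -> rat) :
  cocycle2 <[u]> f -> coboundary2 <[u]> f.
Proof.
move=> co.
set n := #[u].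
have n_gt0 : (0 < n)%N by apply: order_gt0.
pose s (k : nat) : rat := (\sum_(i < k) f (u ^+ i)%g u)%R.
pose t : rat := (s n / n%:R)%R.
pose B (k : nat) : rat := (k%:R * t - s k)%R.
have sS : forall k, s k.+1 = (s k + f (u ^+ k)%g u)%R by move=> k; rewrite /s big_ord_recr.
have BS : forall k, B k.+1 = (B k + t - f (u ^+ k)%g u)%R.
  by move=> k; rewrite /B sS -addn1 natrD; ring.
have Bper : forall k, B (k + n)%N = B k.
  elim=> [|k IH].
    rewrite add0n /B /t mulrC mulfVK ?subrr; first by rewrite /s big_ord0 subr0 mul0r.
    by rewrite pnatr_eq0 -lt0n.
  by rewrite addSn !BS IH -expg_mod_order modnDr expg_mod_order.
have Bq : forall q r, B (r + q * n)%N = B r.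
  elim=> [|q IH] r; first by rewrite mul0n addn0.
  by rewrite mulSn addnCA addnC Bper IH.
have Bmod : forall k, B k = B (k %% n)%N.
  by move=> k; rewrite {1}(divn_eq k n) addnC Bq.
have int0 : forall i, (f (u ^+ i)%g 1%g - f 1%g 1%g)%R \is a Num.int.
  move=> i; have := co (u ^+ i) 1 1 (mem_cycle _ _) (group1 _) (group1 _).
  rewrite !mulg1 => h; rewrite -rpredN; apply: (int_eq h); ring.
have key : forall i j, (f (u ^+ i)%g (u ^+ j)%g - (B i + B j - B (i + j)%N + f 1%g 1%g))%R \is a Num.int.
  move=> i; elim=> [|j IH].
    rewrite addn0 expg0 /B /s big_ord0 subr0 mul0r subr0; apply: (int_eq (int0 i)); ring.
  have := co (u ^+ i) (u ^+ j) u (mem_cycle _ _) (mem_cycle _ _) (cycle_id _).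
  rewrite -expgD -expgSr addnS !BS => h.
  apply: (int_eq (rpredD IH h)); rewrite expgSr; ring.
pose idx (x : T) : nat := oapp val 0%N [pick i : 'I_n | u ^+ i == x].
have idxP : forall x, x \in <[u]> -> u ^+ idx x = x.
  move=> x /cyclePmin[i lti ->]; rewrite /idx.
  case: pickP => [j /eqP //|/(_ (Ordinal lti))]; by rewrite eqxx.
exists (fun x => B (idx x) + f 1%g 1%g)%R => x y xu yu.
have ex := idxP x xu; have ey := idxP y yu.
have exy := idxP (x * y) (groupM xu yu).
have : B (idx (x * y)) = B (idx x + idx y)%N.
  rewrite Bmod [RHS]Bmod; congr B; apply/eqP.
  by rewrite -eq_expg_mod_order exy -{1}ex -{1}ey expgD.
move=> eB; have := key (idx x) (idx y); rewrite ex ey.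
move=> h; apply: (int_eq h); rewrite eB; ring.
Qed.
Definition kap p (s t : 'F_p * 'F_p * 'F_p) : 'F_p :=
  (2%:R * (s.2 + t.1.1 * s.1.2) * t.1.2 + t.1.1 * s.1.2 * (s.1.2 - 1))%R.
Definition kr p (k : 'F_p) : rat := ((nat_of_ord k)%:R / p%:R)%R.

Lemma kap_cocycle p (u v w : 'F_p * 'F_p * 'F_p) :
  (kap v w - kap (law u v) w + kap u (law v w) - kap u v = 0)%R.
Proof.
case: u => [[a b] c]; case: v => [[a' b'] c']; case: w => [[a'' b''] c''].
rewrite /kap /law /=; ring.
Qed.

Lemma kr_int p (k1 k2 k3 k4 : 'F_p) : prime p -> (k1 - k2 + k3 - k4 = 0)%R ->
  (kr k1 - kr k2 + kr k3 - kr k4)%R \is a Num.int.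
Proof.
move=> pp e.
have e2 : ((nat_of_ord k1 + nat_of_ord k3)%N%:R = (nat_of_ord k2 + nat_of_ord k4)%N%:R :> 'F_p)%R.
  rewrite !natrD !natr_Zp; apply/eqP; rewrite -subr_eq0; apply/eqP; rewrite -e; ring.
have e3 : ((nat_of_ord k1 + nat_of_ord k3) %% p = (nat_of_ord k2 + nat_of_ord k4) %% p)%N.
  by rewrite -!val_Fp_nat // e2.
have p0 : (p%:R != 0 :> rat)%R by rewrite pnatr_eq0 -lt0n prime_gt0.
have -> : (kr k1 - kr k2 + kr k3 - kr k4 = ((nat_of_ord k1 + nat_of_ord k3)%N%:R - (nat_of_ord k2 + nat_of_ord k4)%N%:R) / p%:R :> rat)%R.
  by rewrite /kr !natrD; field.
rewrite (divn_eq (nat_of_ord k1 + nat_of_ord k3) p) (divn_eq (nat_of_ord k2 + nat_of_ord k4) p) e3.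
rewrite !natrD !natrM.
have -> : (((((nat_of_ord k1 + nat_of_ord k3) %/ p)%N)%:R * p%:R + (((nat_of_ord k2 + nat_of_ord k4) %% p)%N)%:R -
   ((((nat_of_ord k2 + nat_of_ord k4) %/ p)%N)%:R * p%:R + (((nat_of_ord k2 + nat_of_ord k4) %% p)%N)%:R)) / p%:R =
   (((nat_of_ord k1 + nat_of_ord k3) %/ p)%N)%:R - (((nat_of_ord k2 + nat_of_ord k4) %/ p)%N)%:R :> rat)%R.
  by field.
by rewrite rpredB // rpred_nat.
Qed.
Record hyps (gT : finGroupType) (G : {group gT}) (p : nat) (f1 f2 f3 f4 f5 : gT) : Prop := Hyps {
  h_pr : prime p; h_p3 : (3 <= p)%N; h_cardG : #|G| = (p ^ 5)%N;
  h_gen : G :=: <<[set f1; f2; f3; f4; f5]>>;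
  h_e4 : f4 ^+ p = 1; h_e5 : f5 ^+ p = 1; h_z5 : f5 \in 'Z(G);
  h_r21 : [~ f2, f1] = f3; h_r31 : [~ f3, f1] = f4; h_r41 : [~ f4, f1] = f5;
  h_r32 : [~ f3, f2] = f5; h_r42 : [~ f4, f2] = 1; h_r43 : [~ f4, f3] = 1;
  h_iso : <<[set f4; f5]>> \isog [set: 'Z_p * 'Z_p];
  h_cardH : #|G / <<[set f4; f5]>>| = (p ^ 3)%N;
  h_expH : exponent (G / <<[set f4; f5]>>) = p }.

Lemma norm_by (T : finGroupType) (a b g : T) :
  a ^ g \in <<[set a; b]>> -> b ^ g \in <<[set a; b]>> -> g \in 'N(<<[set a; b]>>).
Proof.
move=> ha hb; rewrite inE -genJ gen_subG; apply/subsetP => y.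
rewrite mem_conjg !inE => /orP[] /eqP e; rewrite -(conjgKV g y) e //.
Qed.


Lemma fG (gT : finGroupType) (G : {group gT}) p f1 f2 f3 f4 f5 :
  hyps G p f1 f2 f3 f4 f5 ->
  [/\ f1 \in G, f2 \in G, f3 \in G, f4 \in G & f5 \in G].
Proof.
case=> _ _ _ gen *; rewrite !gen; split; apply: mem_gen; rewrite !inE eqxx ?orbT //.
Qed.

Lemma z5c (gT : finGroupType) (G : {group gT}) p f1 f2 f3 f4 f5 :
  hyps G p f1 f2 f3 f4 f5 -> forall g, g \in G -> commute f5 g.
Proof. by move=> H g gG; move/centerP: (h_z5 H) => [_ cz]; apply: cz. Qed.
Lemma conj5 (gT : finGroupType) (G : {group gT}) p f1 f2 f3 f4 f5 :
  hyps G p f1 f2 f3 f4 f5 -> forall g, g \in G -> f5 ^ g = f5.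
Proof. by move=> H g gG; rewrite conjgE (z5c H gG) mulKg. Qed.

Lemma inN (gT : finGroupType) (f4 f5 : gT) : f4 \in <<[set f4; f5]>> /\ f5 \in <<[set f4; f5]>>.
Proof. by split; apply: mem_gen; rewrite !inE eqxx ?orbT. Qed.

Lemma normN (gT : finGroupType) (G : {group gT}) p f1 f2 f3 f4 f5 :
  hyps G p f1 f2 f3 f4 f5 -> G \subset 'N(<<[set f4; f5]>>).
Proof.
move=> H; have [g1 g2 g3 g4 g5] := fG H; have [n4 n5] := inN f4 f5.
rewrite {1}(h_gen H) gen_subG; apply/subsetP => g gS.
have gG : g \in G by rewrite (h_gen H) mem_gen.
apply: norm_by; last by rewrite (conj5 H gG).
move: gS; rewrite !inE => /orP[/orP[/orP[/orP[]|]|]|] /eqP ->.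
- by rewrite conjg_mulR (h_r41 H) groupM.
- by rewrite conjg_mulR (h_r42 H) mulg1.
- by rewrite conjg_mulR (h_r43 H) mulg1.
- by rewrite conjgE mulKg.
- by rewrite conjgE -(z5c H g4) mulKg.
Qed.
Lemma cosetM (gT : finGroupType) (G : {group gT}) p f1 f2 f3 f4 f5 :
  hyps G p f1 f2 f3 f4 f5 -> forall x y, x \in G -> y \in G ->
  coset <<[set f4; f5]>> (x * y) = coset <<[set f4; f5]>> x * coset <<[set f4; f5]>> y.
Proof.
move=> H x y xG yG; have nN := subsetP (normN H).
by rewrite morphM //= ?nN.
Qed.

Lemma cosetR (gT : finGroupType) (G : {group gT}) p f1 f2 f3 f4 f5 :
  hyps G p f1 f2 f3 f4 f5 -> forall x y, x \in G -> y \in G ->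
  coset <<[set f4; f5]>> [~ x, y] = [~ coset <<[set f4; f5]>> x, coset <<[set f4; f5]>> y].
Proof.
move=> H x y xG yG; have nN := subsetP (normN H).
by rewrite morphR //= ?nN.
Qed.

Lemma Hsetup (gT : finGroupType) (G : {group gT}) p f1 f2 f3 f4 f5 :
  hyps G p f1 f2 f3 f4 f5 ->
  let N := <<[set f4; f5]>> in
  let h1 := coset N f1 in let h2 := coset N f2 in let h3 := coset N f3 in
  [/\ (forall t : 'F_p * 'F_p * 'F_p, Fm h1 h2 h3 t \in G / N),
      (forall h, h \in G / N -> Fm h1 h2 h3 (crd p h1 h2 h3 h) = h),
      (forall t : 'F_p * 'F_p * 'F_p, crd p h1 h2 h3 (Fm h1 h2 h3 t) = t) &
      [/\ h1 ^+ p = 1, h2 ^+ p = 1, h3 ^+ p = 1, commute h3 h1 &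
       [/\ commute h3 h2, h2 * h1 = h1 * h2 * h3, coset N f4 = 1 & coset N f5 = 1]]].
Proof.
move=> H N h1 h2 h3.
have [g1 g2 g3 g4 g5] := fG H; have [n4 n5] := inN f4 f5.
have nN := subsetP (normN H).
have c4 : coset N f4 = 1 by apply: coset_id.
have c5 : coset N f5 = 1 by apply: coset_id.
have hG : forall x, x \in G -> coset N x \in G / N by move=> x xG; apply: mem_quotient.
have hexp : forall h, h \in G / N -> h ^+ p = 1.
  by move=> h hH; rewrite -(h_expH H) expg_exponent.
have c31 : commute h3 h1.
  by apply/commgP; rewrite /h3 /h1 -(cosetR H) // (h_r31 H) c4.
have c32 : commute h3 h2.
  by apply/commgP; rewrite /h3 /h2 -(cosetR H) // (h_r32 H) c5.
have e : h2 * h1 = h1 * h2 * h3.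
  by rewrite commgC /h3 -(h_r21 H) (cosetR H).
have sGH : G / N \subset <<[set h1; h2; h3]>>.
  apply/subsetP => _ /morphimP[x _ xG ->].
  pose P := fun x => (x \in G) && (coset N x \in <<[set h1; h2; h3]>>).
  suff /andP[] : P x by [].
  move: xG; rewrite {1}(h_gen H) => xG.
  apply: (gen_closed _ _ _ xG).
  - by rewrite /P group1 morph1 group1.
  - move=> u v /andP[uG uh] /andP[vG vh]; rewrite /P groupM // (cosetM H) //.
    exact: groupM.
  move=> y; rewrite !inE => /orP[/orP[/orP[/orP[]|]|]|] /eqP ->; rewrite /P ?g1 ?g2 ?g3 ?g4 ?g5 ?c4 ?c5 ?group1 //;
    by apply: mem_gen; rewrite !inE eqxx ?orbT ?orTb.
have [FH crdF Fcrd] := crd_main (h_pr H) (hG _ g1) (hG _ g2) (hG _ g3) hexp (h_cardH H) sGH c31 c32 e.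
split=> //; split; rewrite ?hexp ?hG //.
Qed.
Definition crdG (gT : finGroupType) p (f1 f2 f3 f4 f5 : gT) (x : gT) : 'F_p * 'F_p * 'F_p :=
  crd p (coset <<[set f4; f5]>> f1) (coset <<[set f4; f5]>> f2) (coset <<[set f4; f5]>> f3)
    (coset <<[set f4; f5]>> x).

Lemma crdG_mul (gT : finGroupType) (G : {group gT}) p f1 f2 f3 f4 f5 :
  hyps G p f1 f2 f3 f4 f5 -> forall x y, x \in G -> y \in G ->
  crdG p f1 f2 f3 f4 f5 (x * y) = law (crdG p f1 f2 f3 f4 f5 x) (crdG p f1 f2 f3 f4 f5 y).
Proof.
move=> H x y xG yG; have [FH crdF Fcrd [e1 e2 e3 c31 [c32 e _ _]]] := Hsetup H.
rewrite /crdG (cosetM H) // -{1}(crdF _ (mem_quotient _ xG)) -{1}(crdF _ (mem_quotient _ yG)).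
by rewrite Fm_mul ?(h_pr H) // Fcrd.
Qed.

Lemma crdG_Fm (gT : finGroupType) (G : {group gT}) p f1 f2 f3 f4 f5 :
  hyps G p f1 f2 f3 f4 f5 -> forall x (t : 'F_p * 'F_p * 'F_p), x \in G ->
  coset <<[set f4; f5]>> x = Fm (coset <<[set f4; f5]>> f1) (coset <<[set f4; f5]>> f2)
    (coset <<[set f4; f5]>> f3) t -> crdG p f1 f2 f3 f4 f5 x = t.
Proof.
move=> H x t xG e; have [FH crdF Fcrd _] := Hsetup H.
by rewrite /crdG e Fcrd.
Qed.

Lemma crdG_eq (gT : finGroupType) (G : {group gT}) p f1 f2 f3 f4 f5 :
  hyps G p f1 f2 f3 f4 f5 -> forall x, x \in G ->
  coset <<[set f4; f5]>> x = Fm (coset <<[set f4; f5]>> f1) (coset <<[set f4; f5]>> f2)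
    (coset <<[set f4; f5]>> f3) (crdG p f1 f2 f3 f4 f5 x).
Proof.
move=> H x xG; have [FH crdF Fcrd _] := Hsetup H.
by rewrite /crdG crdF // mem_quotient.
Qed.

Lemma crdG_gens (gT : finGroupType) (G : {group gT}) p f1 f2 f3 f4 f5 :
  hyps G p f1 f2 f3 f4 f5 ->
  [/\ crdG p f1 f2 f3 f4 f5 f1 = (1, 0, 0)%R, crdG p f1 f2 f3 f4 f5 f2 = (0, 1, 0)%R,
      crdG p f1 f2 f3 f4 f5 f3 = (0, 0, 1)%R &
      forall x, x \in G -> coset <<[set f4; f5]>> x = 1 -> crdG p f1 f2 f3 f4 f5 x = (0, 0, 0)%R].
Proof.
move=> H; have [g1 g2 g3 g4 g5] := fG H; have pp := h_pr H.
split; [apply: (crdG_Fm H g1)|apply: (crdG_Fm H g2)|apply: (crdG_Fm H g3)|];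
  rewrite /Fm; cbn [fst snd]; rewrite ?Fp_val1 ?Fp_val0 // ?expg0 ?expg1 ?mulg1 ?mul1g //.
by move=> x xG e; apply: (crdG_Fm H xG); rewrite e /Fm; cbn [fst snd]; rewrite Fp_val0 !expg0 !mulg1.
Qed.

Lemma crdG_X (gT : finGroupType) (G : {group gT}) p f1 f2 f3 f4 f5 :
  hyps G p f1 f2 f3 f4 f5 -> forall x k, x \in G ->
  (crdG p f1 f2 f3 f4 f5 (x ^+ k)).1.1 = (k%:R * (crdG p f1 f2 f3 f4 f5 x).1.1)%R /\
  (crdG p f1 f2 f3 f4 f5 (x ^+ k)).1.2 = (k%:R * (crdG p f1 f2 f3 f4 f5 x).1.2)%R.
Proof.
move=> H x k xG; elim: k => [|k [IH1 IH2]].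
  have [_ _ _ c1] := crdG_gens H; rewrite expg0 c1 ?group1 ?morph1 //; cbn [fst snd]; split; by rewrite mul0r.
rewrite expgS (crdG_mul H) ?groupX // /law; cbn [fst snd]; rewrite IH1 IH2 [(k.+1)%:R%R]mulrS; split; ring.
Qed.
Lemma crdG1 (gT : finGroupType) (G : {group gT}) p f1 f2 f3 f4 f5 :
  hyps G p f1 f2 f3 f4 f5 -> forall x, x \in G -> coset <<[set f4; f5]>> x = 1 ->
  crdG p f1 f2 f3 f4 f5 x = (0, 0, 0)%R.
Proof. by move=> H; have [_ _ _ c] := crdG_gens H. Qed.

Lemma comm4 (gT : finGroupType) (G : {group gT}) p f1 f2 f3 f4 f5 :
  hyps G p f1 f2 f3 f4 f5 -> forall y, y \in G ->
  [~ f4, y] = f5 ^+ (crdG p f1 f2 f3 f4 f5 y).1.1.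
Proof.
move=> H y yG; have [g1 g2 g3 g4 g5] := fG H; have [n4 n5] := inN f4 f5.
have pp := h_pr H; have [c1 c2 c3 _] := crdG_gens H.
pose P := fun y => (y \in G) && ([~ f4, y] == f5 ^+ (crdG p f1 f2 f3 f4 f5 y).1.1).
suff /andP[_ /eqP //] : P y.
move: yG; rewrite {1}(h_gen H) => yG; apply: (gen_closed _ _ _ yG).
- by rewrite /P group1 (crdG1 H) ?morph1 // commg1 Fp_val0 expg0 eqxx.
- move=> u v /andP[uG /eqP hu] /andP[vG /eqP hv]; rewrite /P groupM //.
  rewrite /=; apply/eqP.
  rewrite commgMJ hu hv (crdG_mul H) // /law; cbn [fst snd].
  by rewrite expFpD ?(h_e5 H) // conjXg (conj5 H vG) -!expgD addnC.
move=> x; rewrite !inE => /orP[/orP[/orP[/orP[]|]|]|] /eqP ->; rewrite /P ?g1 ?g2 ?g3 ?g4 ?g5 ?andTb; apply/eqP.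
- by rewrite c1; cbn [fst snd]; rewrite Fp_val1 // expg1 (h_r41 H).
- by rewrite c2; cbn [fst snd]; rewrite Fp_val0 expg0 (h_r42 H).
- by rewrite c3; cbn [fst snd]; rewrite Fp_val0 expg0 (h_r43 H).
- by rewrite (crdG1 H) ?coset_id //; cbn [fst snd]; rewrite Fp_val0 expg0 commgg.
- rewrite (crdG1 H) ?coset_id //; cbn [fst snd]; rewrite Fp_val0 expg0; apply/eqP/commgP.
  exact: commute_sym (z5c H g4).
Qed.
Lemma bin2R (R : comNzRingType) n : (2%:R * ('C(n, 2))%:R = n%:R * (n%:R - 1) :> R)%R.
Proof.
elim: n => [|n IH]; first by rewrite bin0n mulr0 mul0r.
rewrite binS bin1 natrD mulrDr IH -(addn1 n) natrD; ring.
Qed.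

Lemma unit2 p : prime p -> (3 <= p)%N -> (2%:R : 'F_p)%R \is a GRing.unit.
Proof.
move=> pp p3; rewrite unitFpE //; rewrite prime_coprime //.
by apply/negP => /dvdn_leq => /(_ isT) hp; move: (leq_trans p3 hp).
Qed.

Lemma binFp p (a a' : 'F_p) : prime p -> (3 <= p)%N ->
  (('C(nat_of_ord (a + a')%R, 2))%:R = ('C(nat_of_ord a, 2))%:R + ('C(nat_of_ord a', 2))%:R + a * a' :> 'F_p)%R.
Proof.
move=> pp p3; apply: (mulrI (unit2 pp p3)).
rewrite !mulrDr !bin2R !natr_Zp; ring.
Qed.
Definition jG (gT : finGroupType) p (f1 f2 f3 f4 f5 : gT) (x : gT) : 'F_p :=
  (('C(nat_of_ord (crdG p f1 f2 f3 f4 f5 x).1.1, 2))%:R + (crdG p f1 f2 f3 f4 f5 x).1.2)%R.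

Lemma comm3 (gT : finGroupType) (G : {group gT}) p f1 f2 f3 f4 f5 :
  hyps G p f1 f2 f3 f4 f5 -> forall y, y \in G ->
  [~ f3, y] = f4 ^+ (crdG p f1 f2 f3 f4 f5 y).1.1 * f5 ^+ (jG p f1 f2 f3 f4 f5 y).
Proof.
move=> H y yG; have [g1 g2 g3 g4 g5] := fG H; have [n4 n5] := inN f4 f5.
have pp := h_pr H; have [c1 c2 c3 _] := crdG_gens H.
have e4 := h_e4 H; have e5 := h_e5 H.
have cz : forall g k, g \in G -> commute (f5 ^+ k) g.
  by move=> g k gG; exact: commute_sym (commuteX k (commute_sym (z5c H gG))).
pose P := fun y => (y \in G) && ([~ f3, y] == f4 ^+ (crdG p f1 f2 f3 f4 f5 y).1.1 * f5 ^+ (jG p f1 f2 f3 f4 f5 y)).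
suff /andP[_ /eqP //] : P y.
move: yG; rewrite {1}(h_gen H) => yG; apply: (gen_closed _ _ _ yG).
- rewrite /P group1 /jG (crdG1 H) ?morph1 //; cbn [fst snd].
  by rewrite commg1 Fp_val0 bin0n addr0 Fp_val0 !expg0 mulg1 eqxx.
- move=> u v /andP[uG /eqP hu] /andP[vG /eqP hv]; rewrite /P groupM //=; apply/eqP.
  rewrite commgMJ hu hv conjMg !conjXg (conj5 H vG) conjg_mulR (comm4 H vG).
  rewrite expgMn; last exact: commute_sym (cz _ _ g4).
  rewrite /jG (crdG_mul H) // /law; cbn [fst snd].
  rewrite binFp ?(h_p3 H) // !expFpD // expFpM // expgM.
  have c4 := cz _ _ (groupX (crdG p f1 f2 f3 f4 f5 u).1.1 g4).
  rewrite -!expgM !mulgA (swapg _ (c4 _)) (swapg _ (c4 _)) -!mulgA -!expgD !mulgA -!expgD.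
  congr (_ ^+ _ * _ ^+ _); ring.
move=> x; rewrite !inE => /orP[/orP[/orP[/orP[]|]|]|] /eqP ->; rewrite /P ?g1 ?g2 ?g3 ?g4 ?g5 ?andTb; apply/eqP; rewrite /jG.
- rewrite c1; cbn [fst snd]; rewrite Fp_val1 // (bin_small (isT : 1 < 2)%N) addr0.
  by rewrite Fp_val0 expg1 expg0 mulg1 (h_r31 H).
- rewrite c2; cbn [fst snd]; rewrite Fp_val0 bin0n add0r Fp_val1 // expg0 expg1 mul1g (h_r32 H) //.
- by rewrite c3; cbn [fst snd]; rewrite Fp_val0 bin0n addr0 Fp_val0 !expg0 mulg1 commgg.
- rewrite (crdG1 H) ?coset_id //; cbn [fst snd]; rewrite Fp_val0 bin0n addr0 Fp_val0 !expg0 mulg1.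
  by rewrite -invgR (h_r43 H) invg1.
- rewrite (crdG1 H) ?coset_id //; cbn [fst snd]; rewrite Fp_val0 bin0n addr0 Fp_val0 !expg0 mulg1.
  apply/eqP/commgP; exact: commute_sym (z5c H g3).
Qed.
Lemma cardN (gT : finGroupType) (G : {group gT}) p f1 f2 f3 f4 f5 :
  hyps G p f1 f2 f3 f4 f5 -> #|<<[set f4; f5]>>| = (p * p)%N.
Proof.
move=> H; rewrite (card_isog (h_iso H)) cardsT card_prod !card_ord Zp_cast // prime_gt1 //; exact: h_pr H.
Qed.

Lemma ord_le (gT : finGroupType) (x : gT) p : prime p -> x ^+ p = 1 -> (#|<[x]>| <= p)%N.
Proof.
by move=> pp e; apply: dvdn_leq; [exact: prime_gt0 | rewrite order_dvdn e].
Qed.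

Lemma ord5 (gT : finGroupType) (G : {group gT}) p f1 f2 f3 f4 f5 :
  hyps G p f1 f2 f3 f4 f5 -> #[f5] = p.
Proof.
move=> H; have pp := h_pr H.
have d : #[f5] %| p by rewrite order_dvdn (h_e5 H).
have [e|ne] := eqVneq #[f5] 1%N; last by apply/(prime_nt_dvdP pp ne).
move/eqP: e; rewrite order_eq1 => /eqP e5.
have : <<[set f4; f5]>> \subset <[f4]>.
  by rewrite gen_subG; apply/subsetP => y; rewrite !inE e5 => /orP[] /eqP ->; rewrite ?cycle_id ?group1.
move/subset_leq_card; rewrite (cardN H) => hle.
have := leq_trans hle (ord_le pp (h_e4 H)); have := prime_gt1 pp; nia.
Qed.

Lemma f4notin (gT : finGroupType) (G : {group gT}) p f1 f2 f3 f4 f5 :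
  hyps G p f1 f2 f3 f4 f5 -> forall k, f4 ^+ k \in <[f5]> -> p %| k.
Proof.
move=> H k hk; have pp := h_pr H; apply/negPn/negP => nd.
have u : (k%:R : 'F_p)%R \is a GRing.unit by rewrite unitFpE // prime_coprime.
set k' := nat_of_ord ((k%:R : 'F_p)^-1)%R.
have e : ((k * k') %% p = 1)%N.
  by rewrite -val_Fp_nat // natrM /k' natr_Zp mulrV // Fp_val1.
have : f4 \in <[f5]>.
  by rewrite -(expg1 f4) -e expg_mod ?(h_e4 H) // expgM groupX.
move=> f4in.
have : <<[set f4; f5]>> \subset <[f5]>.
  by rewrite gen_subG; apply/subsetP => y; rewrite !inE => /orP[] /eqP ->; rewrite ?cycle_id.
move/subset_leq_card; rewrite (cardN H) => hle.
have := leq_trans hle (ord_le pp (h_e5 H)); have := prime_gt1 pp; nia.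
Qed.
Lemma commN (gT : finGroupType) (G : {group gT}) p f1 f2 f3 f4 f5 :
  hyps G p f1 f2 f3 f4 f5 -> forall x n, x \in G -> n \in <<[set f4; f5]>> ->
  [~ x, n] \in <[f5 ^+ (crdG p f1 f2 f3 f4 f5 x).1.1]>.
Proof.
move=> H x n xG nN; have [g1 g2 g3 g4 g5] := fG H.
have sNG : <<[set f4; f5]>> \subset G.
  by rewrite gen_subG; apply/subsetP => y; rewrite !inE => /orP[] /eqP ->.
pose P := fun n => (n \in G) && ([~ x, n] \in <[f5 ^+ (crdG p f1 f2 f3 f4 f5 x).1.1]>).
suff /andP[] : P n by [].
apply: (gen_closed _ _ _ nN).
- by rewrite /P group1 commg1 group1.
- move=> u v /andP[uG hu] /andP[vG hv]; rewrite /P groupM //= commgMJ groupM //.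
  by case/cycleP: hu => k ->; rewrite !conjXg (conj5 H vG) mem_cycle.
move=> y; rewrite !inE => /orP[] /eqP ->; rewrite /P ?g4 ?g5 /=.
- by rewrite -invgR (comm4 H xG) groupV cycle_id.
- by have /commgP/eqP -> := commute_sym (z5c H xG); rewrite group1.
Qed.
Lemma Fp_dvd0 p (x : 'F_p) : prime p -> p %| nat_of_ord x -> x = 0%R.
Proof.
move=> pp d; apply: val_inj => /=; have lt := Fp_ltp x pp.
by move: d; rewrite /dvdn modn_small // => /eqP.
Qed.

Lemma abN (gT : finGroupType) (G : {group gT}) p f1 f2 f3 f4 f5 :
  hyps G p f1 f2 f3 f4 f5 -> abelian <<[set f4; f5]>>.
Proof.
move=> H; have [g1 g2 g3 g4 g5] := fG H.
rewrite abelian_gen; apply/centsP => u hu v hv.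
have c45 := z5c H g4.
by case/set2P: hu => ->; case/set2P: hv => ->; try exact: commute_sym c45; try exact: c45.
Qed.

Lemma keyG (gT : finGroupType) (G : {group gT}) p f1 f2 f3 f4 f5 :
  hyps G p f1 f2 f3 f4 f5 -> forall x z, x \in G -> z \in G -> commute x z ->
  (crdG p f1 f2 f3 f4 f5 z).1.1 = 0%R -> (crdG p f1 f2 f3 f4 f5 z).1.2 = 0%R ->
  (crdG p f1 f2 f3 f4 f5 z).2 = 0%R \/
  ((crdG p f1 f2 f3 f4 f5 x).1.1 = 0%R /\ (crdG p f1 f2 f3 f4 f5 x).1.2 = 0%R).
Proof.
move=> H x z xG zG cxz za zb.
have [g1 g2 g3 g4 g5] := fG H; have [n4 n5] := inN f4 f5; have pp := h_pr H.
have nN := subsetP (normN H).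
set N := <<[set f4; f5]>> in n4 n5 nN *.
set d := (crdG p f1 f2 f3 f4 f5 z).2.
set a := (crdG p f1 f2 f3 f4 f5 x).1.1.
set bb := (crdG p f1 f2 f3 f4 f5 x).1.2.
have ez : coset N z = coset N (f3 ^+ d).
  rewrite (crdG_eq H zG) /Fm za zb Fp_val0 !expg0 !mul1g morphX //; exact: nN.
set n := (f3 ^+ d)^-1 * z.
have nin : n \in N.
  have hz : z \in 'N(N) := nN z zG.
  have h3d : f3 ^+ d \in 'N(N) := nN _ (groupX d g3).
  apply: coset_idr; first by rewrite groupM ?groupV.
  by rewrite morphM ?groupV // morphV //= ez mulVg.
have zE : z = f3 ^+ d * n by rewrite /n mulKVg.
have abn := abN H.
have c3 : commute f3 [~ x, f3].
  rewrite -invgR (comm3 H xG); apply: commuteV; apply: commuteM; apply: commuteX.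
  - by apply/commgP; rewrite -invgR (h_r43 H) invg1.
  - exact: commute_sym (z5c H g3).
have inNW : [~ x, f3] ^+ d \in N by rewrite -invgR (comm3 H xG) groupX // groupV groupM // groupX.
have E : [~ x, z] = [~ x, n] * [~ x, f3] ^+ d.
  rewrite zE commgMJ commgX //; congr (_ * _).
  by rewrite conjgE (centsP abn _ inNW _ nin) mulKg.
have V : [~ x, n] = (f4 ^+ a * f5 ^+ (jG p f1 f2 f3 f4 f5 x)) ^+ d.
  move/commgP/eqP: cxz; rewrite E -(invgR f3 x) (comm3 H xG) expgVn => /eqP.
  by rewrite -eq_mulgV1 => /eqP.
have cm := commN H xG nin; rewrite V in cm.
rewrite expgMn in cm; last by apply: commuteX2; exact: commute_sym (z5c H g4).
have [a0|an0] := eqVneq (nat_of_ord a) 0%N.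
  rewrite a0 !expg0 expg1n cycle1 mul1g inE -expgM -order_dvdn (ord5 H) in cm.
  have aE : a = 0%R by apply: val_inj.
  move: cm; rewrite /jG -/a -/bb a0 bin0n add0r Euclid_dvdM // => /orP[] /(Fp_dvd0 pp) e.
  - by right.
  - by left.
left; apply: (Fp_dvd0 pp).
have : f4 ^+ (a * d) \in <[f5]>.
  have sc : <[f5 ^+ a]> \subset <[f5]> by rewrite cycle_subG mem_cycle.
  rewrite expgM -(mulgK (f5 ^+ (jG p f1 f2 f3 f4 f5 x) ^+ d) (_ ^+ d)) groupM //.
    exact: (subsetP sc).
  by rewrite groupV groupX // mem_cycle.
move/(f4notin H); rewrite Euclid_dvdM // => /orP[] // /(Fp_dvd0 pp) e.
by move: an0; rewrite -/a e.
Qed.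
Lemma unitFp p (x : 'F_p) : prime p -> x != 0%R -> x \is a GRing.unit.
Proof.
move=> pp nz; rewrite -[x]natr_Zp unitFpE // prime_coprime //.
by apply/negP => /(Fp_dvd0 pp) e; rewrite e eqxx in nz.
Qed.

Lemma crdG_comm (gT : finGroupType) (G : {group gT}) p f1 f2 f3 f4 f5 :
  hyps G p f1 f2 f3 f4 f5 -> forall x y, x \in G -> y \in G -> commute x y ->
  ((crdG p f1 f2 f3 f4 f5 x).1.2 * (crdG p f1 f2 f3 f4 f5 y).1.1 =
   (crdG p f1 f2 f3 f4 f5 y).1.2 * (crdG p f1 f2 f3 f4 f5 x).1.1)%R.
Proof.
move=> H x y xG yG cxy.
have := congr1 (fun t => t.2) (congr1 (crdG p f1 f2 f3 f4 f5) cxy).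
rewrite !(crdG_mul H) // /law; cbn [fst snd] => e.
apply: (addrI ((crdG p f1 f2 f3 f4 f5 x).2 + (crdG p f1 f2 f3 f4 f5 y).2)%R); rewrite e; ring.
Qed.

Lemma pairDir (gT : finGroupType) (G : {group gT}) p f1 f2 f3 f4 f5 :
  hyps G p f1 f2 f3 f4 f5 -> forall x y, x \in G -> y \in G -> commute x y ->
  (crdG p f1 f2 f3 f4 f5 x).1.1 != 0%R \/ (crdG p f1 f2 f3 f4 f5 x).1.2 != 0%R ->
  coset <<[set f4; f5]>> y \in <[coset <<[set f4; f5]>> x]>.
Proof.
move=> H x y xG yG cxy nz; have pp := h_pr H; have nN := subsetP (normN H).
have par := crdG_comm H xG yG cxy.
set a := (crdG p f1 f2 f3 f4 f5 x).1.1 in nz par *.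
set b := (crdG p f1 f2 f3 f4 f5 x).1.2 in nz par *.
set a' := (crdG p f1 f2 f3 f4 f5 y).1.1 in par *.
set b' := (crdG p f1 f2 f3 f4 f5 y).1.2 in par *.
have [k [ka kb]] : exists k : nat, a' = (k%:R * a)%R /\ b' = (k%:R * b)%R.
  have [a0|an0] := eqVneq a 0%R.
    have bn0 : b != 0%R by case: nz => //; rewrite a0 eqxx.
    have ub := unitFp pp bn0.
    have a'0 : a' = 0%R by apply: (mulrI ub); rewrite par a0 !mulr0.
    exists (nat_of_ord (b' * b^-1)%R); rewrite natr_Zp a0 a'0 mulr0; split=> //.
    by rewrite mulrVK.
  have ua := unitFp pp an0.
  exists (nat_of_ord (a' * a^-1)%R); rewrite natr_Zp mulrVK //; split=> //.
  rewrite (_ : a' * a^-1 * b = a^-1 * (b * a'))%R; last by ring.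
  by rewrite par mulrCA mulVr // mulr1.
set z := y * (x ^+ k)^-1.
have zG : z \in G by rewrite groupM ?groupV ?groupX.
have yE : y = z * x ^+ k by rewrite /z mulgKV.
have cxz : commute x z by apply: commuteM => //; apply: commuteV; apply: commuteX.
have cz := crdG_mul H zG (groupX k xG); rewrite -yE in cz.
have [X1 X2] := crdG_X H k xG.
have e1 := congr1 (fun t => t.1.1) cz; have e2 := congr1 (fun t => t.1.2) cz.
rewrite /law in e1 e2; cbn [fst snd] in e1; cbn [fst snd] in e2.
rewrite X1 -/a' -/a ka in e1; rewrite X2 -/b' -/b kb in e2.
have z1 : (crdG p f1 f2 f3 f4 f5 z).1.1 = 0%R by apply: (addIr (k%:R * a)%R); rewrite -e1 add0r.
have z2 : (crdG p f1 f2 f3 f4 f5 z).1.2 = 0%R by apply: (addIr (k%:R * b)%R); rewrite -e2 add0r.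
have z3 : (crdG p f1 f2 f3 f4 f5 z).2 = 0%R.
  case: (keyG H xG zG cxz z1 z2) => // [[a0 b0]].
  by case: nz => /eqP; [move/(_ a0) | move/(_ b0)].
have cz1 : coset <<[set f4; f5]>> z = 1.
  rewrite (crdG_eq H zG); case: (crdG _ _ _ _ _ _ z) z1 z2 z3 => [[u v] w] /= -> -> ->.
  by rewrite /Fm; cbn [fst snd]; rewrite Fp_val0 !expg0 !mulg1.
rewrite yE (cosetM H) ?groupX // cz1 mul1g morphX ?mem_cycle //; exact: nN.
Qed.
Lemma in_h3 (gT : finGroupType) (G : {group gT}) p f1 f2 f3 f4 f5 :
  hyps G p f1 f2 f3 f4 f5 -> forall x, x \in G ->
  (crdG p f1 f2 f3 f4 f5 x).1.1 = 0%R -> (crdG p f1 f2 f3 f4 f5 x).1.2 = 0%R ->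
  coset <<[set f4; f5]>> x \in <[coset <<[set f4; f5]>> f3]>.
Proof.
move=> H x xG a0 b0; rewrite (crdG_eq H xG).
case: (crdG _ _ _ _ _ _ x) a0 b0 => [[u v] w] /= -> ->.
by rewrite /Fm; cbn [fst snd]; rewrite Fp_val0 !expg0 !mul1g mem_cycle.
Qed.

Lemma pairCyc (gT : finGroupType) (G : {group gT}) p f1 f2 f3 f4 f5 :
  hyps G p f1 f2 f3 f4 f5 -> forall x y, x \in G -> y \in G -> commute x y ->
  exists2 u, u \in G / <<[set f4; f5]>> &
    coset <<[set f4; f5]>> x \in <[u]> /\ coset <<[set f4; f5]>> y \in <[u]>.
Proof.
move=> H x y xG yG cxy.
have [nzx|zx] := boolP (((crdG p f1 f2 f3 f4 f5 x).1.1 != 0%R) || ((crdG p f1 f2 f3 f4 f5 x).1.2 != 0%R)).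
  exists (coset <<[set f4; f5]>> x); first exact: mem_quotient.
  split; first exact: cycle_id.
  by apply: (pairDir H) => //; apply/orP.
have [nzy|zy] := boolP (((crdG p f1 f2 f3 f4 f5 y).1.1 != 0%R) || ((crdG p f1 f2 f3 f4 f5 y).1.2 != 0%R)).
  exists (coset <<[set f4; f5]>> y); first exact: mem_quotient.
  split; last exact: cycle_id.
  apply: (pairDir H yG xG (commute_sym cxy)).
  by apply/orP.
have [g1 g2 g3 g4 g5] := fG H.
exists (coset <<[set f4; f5]>> f3); first exact: mem_quotient.
move: zx zy; rewrite !negb_or !negbK => /andP[/eqP ax /eqP bx] /andP[/eqP ay /eqP bY].
by split; apply: (in_h3 H).
Qed.
Lemma crdH_mul (gT : finGroupType) (G : {group gT}) p f1 f2 f3 f4 f5 :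
  hyps G p f1 f2 f3 f4 f5 -> forall h h', h \in G / <<[set f4; f5]>> -> h' \in G / <<[set f4; f5]>> ->
  let N := <<[set f4; f5]>> in
  crd p (coset N f1) (coset N f2) (coset N f3) (h * h') =
  law (crd p (coset N f1) (coset N f2) (coset N f3) h) (crd p (coset N f1) (coset N f2) (coset N f3) h').
Proof.
move=> H h h' hH h'H N; have [FH crdF Fcrd [e1 e2 e3 c31 [c32 e _ _]]] := Hsetup H.
by rewrite -{1}(crdF _ hH) -{1}(crdF _ h'H) Fm_mul ?(h_pr H) // Fcrd.
Qed.

Definition kH (gT : finGroupType) p (f1 f2 f3 f4 f5 : gT) (h h' : coset_of <<[set f4; f5]>>) : rat :=
  kr (kap (crd p (coset <<[set f4; f5]>> f1) (coset <<[set f4; f5]>> f2) (coset <<[set f4; f5]>> f3) h)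
          (crd p (coset <<[set f4; f5]>> f1) (coset <<[set f4; f5]>> f2) (coset <<[set f4; f5]>> f3) h')).
Arguments kH {gT} p f1 f2 f3 f4 f5 h h'.

Lemma kH_cocycle (gT : finGroupType) (G : {group gT}) p f1 f2 f3 f4 f5 :
  hyps G p f1 f2 f3 f4 f5 -> cocycle2 (G / <<[set f4; f5]>>) (kH p f1 f2 f3 f4 f5).
Proof.
move=> H x y z xH yH zH; rewrite /kH !(crdH_mul H) ?groupM //.
by apply: kr_int; [exact: h_pr H | exact: kap_cocycle].
Qed.

Lemma kap0l p (t : 'F_p * 'F_p * 'F_p) : kap (0, 0, 0)%R t = 0%R.
Proof. by rewrite /kap; cbn [fst snd]; ring. Qed.
Lemma kap0r p (t : 'F_p * 'F_p * 'F_p) : kap t (0, 0, 0)%R = 0%R.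
Proof. by rewrite /kap; cbn [fst snd]; ring. Qed.
Lemma kr0 p : kr (0 : 'F_p)%R = 0%R.
Proof. by rewrite /kr Fp_val0 mul0r. Qed.

Lemma mainB0 (gT : finGroupType) (G : {group gT}) p f1 f2 f3 f4 f5 :
  hyps G p f1 f2 f3 f4 f5 -> ~ B0_trivial G.
Proof.
move=> H; have [g1 g2 g3 g4 g5] := fG H; have pp := h_pr H.
set N := <<[set f4; f5]>>.
pose c := fun x y => kH p f1 f2 f3 f4 f5 (coset N x) (coset N y).
have cM : forall x y, x \in G -> y \in G -> coset N (x * y) = coset N x * coset N y.
  by move=> x y; apply: (cosetM H).
have coG : cocycle2 G c.
  move=> x y z xG yG zG; rewrite /c !cM //.
  by apply: (kH_cocycle H); rewrite ?groupM ?mem_quotient.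
have inB : in_B0 G c.
  split=> // A sAG [abA [a [b eA]]].
  have aA : a \in A by rewrite eA mem_gen // !inE eqxx.
  have bA : b \in A by rewrite eA mem_gen // !inE eqxx orbT.
  have aG := subsetP sAG a aA; have bG := subsetP sAG b bA.
  have cab : commute a b by apply: (centsP abA).
  have [u uH [au bu]] := pairCyc H aG bG cab.
  have cu : cocycle2 <[u]> (kH p f1 f2 f3 f4 f5).
    have su : <[u]> \subset G / N by rewrite cycle_subG.
    move=> x y z xu yu zu; apply: (kH_cocycle H); exact: (subsetP su).
  have [beta hbeta] := cyc_cob cu.
  have Au : forall x, x \in A -> coset N x \in <[u]>.
    move=> x; rewrite eA => xA.
    pose P := fun x => (x \in G) && (coset N x \in <[u]>).
    suff /andP[] : P x by [].
    apply: (gen_closed _ _ _ xA).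
    - by rewrite /P group1 morph1 group1.
    - move=> v w /andP[vG vu] /andP[wG wu]; rewrite /P groupM // cM // groupM //.
    by move=> v; rewrite !inE => /orP[] /eqP ->; rewrite /P ?aG ?bG.
  exists (fun x => beta (coset N x)) => x y xA yA.
  rewrite /c cM ?(subsetP sAG) //; apply: hbeta; exact: Au.
move=> B0; have [b hb] := B0 c inB.
have [c1 c2 c3 cz] := crdG_gens H.
have z4 : crdG p f1 f2 f3 f4 f5 f4 = (0, 0, 0)%R by apply: cz => //; apply: coset_id; exact: (inN f4 f5).1.
have z5 : crdG p f1 f2 f3 f4 f5 f5 = (0, 0, 0)%R by apply: cz => //; apply: coset_id; exact: (inN f4 f5).2.
have cE : forall x y, c x y = kr (kap (crdG p f1 f2 f3 f4 f5 x) (crdG p f1 f2 f3 f4 f5 y)) by [].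
have e32 : f3 * f2 = f2 * f3 * f5 by rewrite commgC (h_r32 H).
have e41 : f4 * f1 = f1 * f4 * f5 by rewrite commgC (h_r41 H).
have I1 := hb _ _ g3 g2.
have I2 := hb _ _ g2 g3.
have I3 := hb _ _ (groupM g2 g3) g5.
have I4 := hb _ _ g4 g1.
have I5 := hb _ _ g1 g4.
have I6 := hb _ _ (groupM g1 g4) g5.
rewrite !cE in I1 I2 I3 I4 I5 I6.
rewrite c3 c2 in I1 I2; rewrite z5 kap0r kr0 in I3; rewrite z5 kap0r kr0 in I6; rewrite z4 kap0l kr0 in I4.
rewrite z4 kap0r kr0 in I5.
have k32 : kap (0, 0, 1)%R (0, 1, 0)%R = (2%:R : 'F_p)%R by rewrite /kap; cbn [fst snd]; ring.
have k23 : kap (0, 1, 0)%R (0, 0, 1)%R = (0 : 'F_p)%R by rewrite /kap; cbn [fst snd]; ring.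
rewrite k32 in I1; rewrite k23 kr0 in I2.
have := rpredD (rpredD (rpredB (rpredB (rpredB I1 I2) I3) I4) I5) I6.
rewrite -e32 -e41.
set X := (_ + _)%R.
have -> : X = kr (2%:R : 'F_p)%R by rewrite /X; ring.
rewrite /kr val_Fp_nat // modn_small ?(h_p3 H) // => hint.
have p0 : (0 < p%:R :> rat)%R by rewrite ltr0n prime_gt0.
have nz : ((2%:R / p%:R) != 0 :> rat)%R.
  by rewrite mulf_neq0 // ?invr_eq0 pnatr_eq0 // -lt0n prime_gt0.
have := norm_intr_ge1 hint nz; rewrite ger0_norm ?divr_ge0 // ler_pdivlMr // mul1r ler_nat.
by rewrite leqNgt (leq_trans _ (h_p3 H)).
Qed.

Unset Implicit Arguments.

Theorem lemma2p2 (gT : finGroupType) (G : {group gT}) (p : nat)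
  (f1 f2 f3 f4 f5 : gT) :
  prime p -> (3 <= p)%N ->
  #|G| = (p ^ 5)%N ->
  G :=: <<[set f1; f2; f3; f4; f5]>> ->
  f4 ^+ p = 1 -> f5 ^+ p = 1 -> f5 \in 'Z(G) ->
  [~ f2, f1] = f3 -> [~ f3, f1] = f4 ->
  [~ f4, f1] = f5 -> [~ f3, f2] = f5 ->
  [~ f4, f2] = 1 -> [~ f4, f3] = 1 ->
  <<[set f4; f5]>> \isog [set: 'Z_p * 'Z_p] ->
  ~~ abelian (G / <<[set f4; f5]>>) ->
  #|G / <<[set f4; f5]>>| = (p ^ 3)%N ->
  exponent (G / <<[set f4; f5]>>) = p ->
  ~ B0_trivial G.
Proof.
move=> pp p3 cG gen e4 e5 z5 r21 r31 r41 r32 r42 r43 iso _ cH eH.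
exact: (mainB0 (Hyps pp p3 cG gen e4 e5 z5 r21 r31 r41 r32 r42 r43 iso cH eH)).
Qed.
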